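(* Let $R$ be a power-serieswise Armendariz ring. Then the power series ring $R[[x]]$ is a generalized right quasi-Baer ring if and only if $R$ is a generalized right quasi-Baer ring.
   Context: All rings are associative with identity. For a nonempty subset $X$ of a ring $R$, $r_R(X)=\{a\in R : xa=0 \text{ for all } x\in X\}$, and for a positive integer $n$, $X^n$ denotes the set of all products $a_1\cdots a_n$ with $a_i\in X$. A ring $R$ is generalized right quasi-Baer if for every right ideal $I$ of $R$ there exist a positive integer $n$ (depending on $I$) and an idempotent $e\in R$ with $r_R(I^n)=eR$. A ring $R$ is power-serieswise Armendariz if whenever $f(x)=\sum_{i\ge0}a_ix^i$ and $g(x)=\sum_{j\ge0}b_jx^j$ in $R[[x]]$ satisfy $f(x)g(x)=0$, then $a_ib_j=0$ for all $i,j$. *)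

(* Defs.v *)
From mathcomp Require Import all_boot all_algebra.
Set Implicit Arguments. Unset Strict Implicit. Unset Printing Implicit Defensive.
Import GRing.Theory.
Local Open Scope ring_scope.

(* Ring-theoretic notions stated for an arbitrary carrier T equipped with
   explicit ring operations (add, opp, mul, zero).  They are instantiated
   below both with a mathcomp ring R and with the power series ring R[[x]]. *)
Section RingNotions.
Variables (T : Type) (add : T -> T -> T) (opp : T -> T) (mul : T -> T -> T)
          (zero : T).

Definition is_right_ideal (I : T -> Prop) : Prop :=
  I zero /\
  (forall a b, I a -> I b -> I (add a (opp b))) /\
  (forall a r, I a -> I (mul a r)).

(* setpow I n = I^(n.+1) = set of products a_1 * ... * a_(n+1), a_i in I. *)
Fixpoint setpow (I : T -> Prop) (n : nat) : T -> Prop :=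
  match n with
  | 0 => I
  | n'.+1 => fun c => exists a b, setpow I n' a /\ I b /\ c = mul a b
  end.

Definition r_ann (X : T -> Prop) : T -> Prop :=
  fun a => forall x, X x -> mul x a = zero.

Definition gen_right_quasi_Baer : Prop :=
  forall I : T -> Prop, is_right_ideal I ->
    exists (n : nat) (e : T), mul e e = e /\
      (forall a, r_ann (setpow I n) a <-> exists r, a = mul e r).
End RingNotions.

Section PowerSeries.
Variable R : pzRingType.
Definition pseries := nat -> R.
Definition ps_add (f g : pseries) : pseries := fun n => f n + g n.
Definition ps_opp (f : pseries) : pseries := fun n => - f n.
Definition ps_mul (f g : pseries) : pseries :=
  fun n => \sum_(i < n.+1) f i * g (n - i)%N.
Definition ps_zero : pseries := fun _ => 0.
Definition ps_one : pseries := fun n => if n == 0%N then 1 else 0.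

Definition ps_Armendariz : Prop :=
  forall f g : pseries, ps_mul f g = ps_zero -> forall i j, f i * g j = 0.
End PowerSeries.

Definition ring_gen_rqB (R : pzRingType) : Prop :=
  @gen_right_quasi_Baer R +%R -%R *%R 0.

Definition pseries_gen_rqB (R : pzRingType) : Prop :=
  @gen_right_quasi_Baer (pseries R) (@ps_add R) (@ps_opp R) (@ps_mul R)
    (@ps_zero R).

(* Main.v *)
Require Import Defs.
From mathcomp Require Import all_boot all_algebra.
From Stdlib Require Import FunctionalExtensionality.
From mathcomp Require Import zify.
Set Implicit Arguments. Unset Strict Implicit. Unset Printing Implicit Defensive.
Import GRing.Theory.
Local Open Scope ring_scope.

Section Aux.
Variable R : pzRingType.
Implicit Types f g : pseries R.

Definition mono (c : R) (m : nat) : pseries R := fun n => if n == m then c else 0.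
Definition rsc f (y : R) : pseries R := fun k => f k * y.
Definition lsc (y : R) f : pseries R := fun k => y * f k.

Lemma ps_mul_mono f c m k : ps_mul f (mono c m) (k + m)%N = f k * c.
Proof.
have hk : (k < (k + m).+1)%N by lia.
rewrite /ps_mul (bigD1 (Ordinal hk)) //=.
rewrite /mono addKn eqxx big1 ?addr0 // => i /eqP ne.
case: eqP => [h|_]; last by rewrite mulr0.
exfalso; apply: ne; apply: val_inj => /=.
move: (ltn_ord i) h; case: i => [j ?] /=; lia.
Qed.

Lemma ps_mul_const_r f c k : ps_mul f (mono c 0) k = f k * c.
Proof. by have := ps_mul_mono f c 0 k; rewrite addn0. Qed.

Lemma ps_mul_const_l c g k : ps_mul (mono c 0) g k = c * g k.
Proof.
rewrite /ps_mul big_ord_recl /= /mono eqxx subn0 big1 ?addr0 // => i _.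
by rewrite /bump /= mul0r.
Qed.

Lemma ps_mul0 f g : ps_mul f g 0%N = f 0%N * g 0%N.
Proof. by rewrite /ps_mul big_ord1. Qed.

Lemma ps_mul_rsc f g y k : ps_mul f g k * y = ps_mul f (rsc g y) k.
Proof. by rewrite /ps_mul mulr_suml; apply: eq_bigr => i _; rewrite /rsc mulrA. Qed.

End Aux.

Section Key.
Variable R : pzRingType.
Hypothesis Arm : ps_Armendariz R.
Variable J : pseries R -> Prop.
Variable C : R -> Prop.
Hypothesis HC : forall c, C c <-> exists f i, J f /\ c = f i.

Definition D n (c : R) := exists p i, setpow (@ps_mul R) J n p /\ c = p i.

Lemma keyD n : forall y, (forall c, D n c -> c * y = 0) <->
  (forall c, setpow *%R C n c -> c * y = 0).
Proof.
elim: n => [|n IH] y.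
  by split => H c Hc; apply: H; apply/HC.
split => H.
  move=> _ [c [d [Hc [Hd ->]]]]; rewrite -mulrA.
  have H2 : forall c, D n c -> c * (d * y) = 0.
    move=> _ [a [j [Ha ->]]]; move/HC: Hd => [b [l [Hb ->]]].
    have Z : ps_mul a (rsc b y) = ps_zero R.
      apply: functional_extensionality => i; rewrite -ps_mul_rsc; apply: H.
      by exists (ps_mul a b), i; split => //; exists a, b.
    by have := Arm Z j l.
  by move/IH: H2; apply.
move=> _ [p [i [[a [b [Ha [Hb ->]]]] ->]]].
rewrite ps_mul_rsc /ps_mul big1 // => j _; rewrite /rsc.
have Hd : C (b (i - j)%N) by apply/HC; exists b, (i - j)%N.
have H3 : forall c, setpow *%R C n c -> c * (b (i - j)%N * y) = 0.
  by move=> c Hc; rewrite mulrA; apply: H; exists c, (b (i - j)%N).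
by apply: (proj2 (IH _) H3); exists a, j.
Qed.

Lemma keyG n g : r_ann (@ps_mul R) (ps_zero R) (setpow (@ps_mul R) J n) g <->
  forall k c, setpow *%R C n c -> c * g k = 0.
Proof.
split => H.
  move=> k; apply/keyD => _ [p [i [Hp ->]]].
  exact: Arm (H p Hp) i k.
move=> p Hp; apply: functional_extensionality => m.
rewrite /ps_mul big1 // => i _.
have := proj2 (keyD n (g (m - i)%N)) (fun c hc => H _ c hc); apply.
by exists p, i.
Qed.

End Key.

Theorem corollary3p9 (R : pzRingType) :
  ps_Armendariz R -> (pseries_gen_rqB R <-> ring_gen_rqB R).
Proof.
move=> Arm; split.
- move=> HP I [I0 [Isub Imul]].
  have Iadd : forall a b, I a -> I b -> I (a + b).
    move=> a b Ha Hb; have := Isub a (0 - b) Ha (Isub 0 b I0 Hb).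
    by rewrite sub0r opprK.
  pose J := fun f : pseries R => forall i, I (f i).
  have HJ : is_right_ideal (@ps_add R) (@ps_opp R) (@ps_mul R) (ps_zero R) J.
    split; first by move=> i.
    split; first by move=> f g Hf Hg i; exact: Isub.
    move=> f r Hf m; rewrite /ps_mul.
    apply: (big_ind I) => // i _; exact: Imul.
  have HC : forall c, I c <-> exists f i, J f /\ c = f i.
    move=> c; split.
      move=> Hc; exists (mono c 0), 0%N; split; last by rewrite /mono.
      by move=> i; rewrite /mono; case: eqP.
    by move=> [f [i [Hf ->]]].
  have [n [E [HE Hann]]] := HP J HJ.
  exists n, (E 0%N); split.
    by have := congr1 (fun h => h 0%N) HE; rewrite /= ps_mul0.
  move=> a; split => Ha.
    have Hm : r_ann (@ps_mul R) (ps_zero R) (setpow (@ps_mul R) J n) (mono a 0).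
      apply/(keyG Arm HC) => k c Hc; rewrite /mono; case: eqP => _.
        exact: Ha.
      by rewrite mulr0.
    have [r Hr] := (Hann _).1 Hm.
    exists (r 0%N); have := congr1 (fun h => h 0%N) Hr.
    by rewrite /= ps_mul0 /mono.
  have HEa : r_ann (@ps_mul R) (ps_zero R) (setpow (@ps_mul R) J n) E.
    apply/Hann; exists (mono 1 0); apply: functional_extensionality => k.
    by rewrite ps_mul_const_r mulr1.
  have H2 := (keyG Arm HC n E).1 HEa.
  move: Ha => [r ->] c Hc; by rewrite mulrA H2 // mul0r.
- move=> HR J [J0 [Jsub Jmul]].
  pose C := fun c : R => exists f i, J f /\ c = f i.
  have HC : forall c, C c <-> exists f i, J f /\ c = f i by [].
  have HCi : is_right_ideal +%R -%R *%R 0 C.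
    split; first by exists (ps_zero R), 0%N.
    split.
      move=> _ _ [f [i [Hf ->]]] [g [j [Hg ->]]].
      exists (ps_add (ps_mul f (mono 1 j)) (ps_opp (ps_mul g (mono 1 i)))), (i + j)%N.
      split; first by apply: Jsub; apply: Jmul.
      rewrite /ps_add /ps_opp ps_mul_mono addnC ps_mul_mono.
      by rewrite !mulr1.
    move=> _ r [f [i [Hf ->]]]; exists (ps_mul f (mono r 0)), i; split.
      exact: Jmul.
    by rewrite ps_mul_const_r.
  have [n [e [He Hann]]] := HR C HCi.
  exists n, (mono e 0); split.
    apply: functional_extensionality => k; rewrite ps_mul_const_l /mono.
    by case: eqP => _; rewrite ?He ?mulr0.
  move=> a; split => Ha.
    have H2 := (keyG Arm HC n a).1 Ha.
    exists a; apply: functional_extensionality => k; rewrite ps_mul_const_l.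
    have [r Hr] := (Hann (a k)).1 (fun c hc => H2 k c hc).
    by rewrite Hr mulrA He.
  move: Ha => [r ->]; apply/(keyG Arm HC) => k c Hc.
  rewrite ps_mul_const_l.
  have Her : r_ann *%R 0 (setpow *%R C n) (e * r k) by apply/Hann; exists (r k).
  exact: Her.
Qed.
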